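(* Let $\bar g$ be a two-dimensional Lorentzian metric and $\psi$ a smooth function such that the exact one-form $d\psi$ is a conformal Killing one-form of $\bar g$ which is null (i.e. $\bar g^{-1}(d\psi,d\psi)=0$). Then $\bar g$ is flat and, locally, there exist coordinates $(u,v)$ in which $\bar g=du\,dv$ and $\psi=v$.
   Context: A one-form $\omega$ on a pseudo-Riemannian manifold $(M,\bar g)$ is called a conformal Killing one-form if its metric dual vector field $X=\bar g^{-1}(\omega)$ is a conformal Killing vector field, i.e. $\mathcal{L}_X\bar g=\lambda\,\bar g$ for some function $\lambda$. *)

(* Defs.v *)
From Stdlib Require Import Reals List.
From Coquelicot Require Import Coquelicot.
Open Scope R_scope.

(* Local computations on an open subset of R^2 (a coordinate chart).
   Coordinates are indexed by bool: false = first coordinate, true = second. *)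
Definition pt := (R * R)%type.

Definition coord (p : pt) (i : bool) : R := if i then snd p else fst p.
Definition upd (p : pt) (i : bool) (t : R) : pt :=
  if i then (fst p, t) else (t, snd p).

Definition partial (i : bool) (f : pt -> R) (p : pt) : R :=
  Derive (fun t => f (upd p i t)) (coord p i).

Fixpoint dpart (w : list bool) (f : pt -> R) : pt -> R :=
  match w with
  | nil => f
  | i :: w' => partial i (dpart w' f)
  end.

Definition smooth_on (U : pt -> Prop) (f : pt -> R) : Prop :=
  forall (w : list bool) (p : pt), U p ->
    (forall i, ex_derive (fun t => dpart w f (upd p i t)) (coord p i)) /\
    continuous (dpart w f) p.

Definition sum2 (F : bool -> R) : R := F false + F true.

Definition metric := bool -> bool -> pt -> R.

Definition mdet (g : metric) (p : pt) : R :=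
  g false false p * g true true p - g false true p * g true false p.

Definition is_lorentzian_metric (U : pt -> Prop) (g : metric) : Prop :=
  (forall i j, smooth_on U (g i j)) /\
  (forall i j p, U p -> g i j p = g j i p) /\
  (forall p, U p -> mdet g p < 0).

(* inverse metric g^{ij} (2x2 inverse via the adjugate) *)
Definition ginv (g : metric) (i j : bool) (p : pt) : R :=
  (if Bool.eqb i j then g (negb i) (negb i) p else - g i j p) / mdet g p.

Definition grad (g : metric) (psi : pt -> R) (k : bool) (p : pt) : R :=
  sum2 (fun j => ginv g k j p * partial j psi p).

Definition lie_metric (g : metric) (X : bool -> pt -> R) (i j : bool) (p : pt) : R :=
  sum2 (fun k => X k p * partial k (g i j) p
               + g k j p * partial i (X k) p
               + g i k p * partial j (X k) p).

Definition conformal_killing_vf (U : pt -> Prop) (g : metric) (X : bool -> pt -> R) : Prop :=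
  exists lam : pt -> R, forall p, U p -> forall i j, lie_metric g X i j p = lam p * g i j p.

(* d psi is a conformal Killing one-form: its metric dual is conformal Killing *)
Definition dpsi_conformal_killing (U : pt -> Prop) (g : metric) (psi : pt -> R) : Prop :=
  conformal_killing_vf U g (grad g psi).

Definition dpsi_null (U : pt -> Prop) (g : metric) (psi : pt -> R) : Prop :=
  forall p, U p ->
    sum2 (fun i => sum2 (fun j => ginv g i j p * partial i psi p * partial j psi p)) = 0.

Definition dpsi_nonvanishing (U : pt -> Prop) (psi : pt -> R) : Prop :=
  forall p, U p -> exists i, partial i psi p <> 0.

Definition christoffel (g : metric) (k i j : bool) (p : pt) : R :=
  / 2 * sum2 (fun l => ginv g k l p *
      (partial i (g l j) p + partial j (g i l) p - partial l (g i j) p)).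

Definition riemann (g : metric) (l i j k : bool) (p : pt) : R :=
  partial j (christoffel g l i k) p - partial k (christoffel g l i j) p
  + sum2 (fun m => christoffel g l j m p * christoffel g m i k p
                 - christoffel g l k m p * christoffel g m i j p).

Definition flat_on (U : pt -> Prop) (g : metric) : Prop :=
  forall p, U p -> forall l i j k, riemann g l i j k p = 0.

(* g = du dv := (du (x) dv + dv (x) du)/2 on V *)
Definition metric_is_du_dv (V : pt -> Prop) (g : metric) (u v : pt -> R) : Prop :=
  forall p, V p -> forall i j,
    g i j p = / 2 * (partial i u p * partial j v p + partial j u p * partial i v p).

Definition coord_system (V : pt -> Prop) (u v : pt -> R) : Prop :=
  smooth_on V u /\ smooth_on V v /\
  (forall p q, V p -> V q -> u p = u q -> v p = v q -> p = q) /\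
  (forall p, V p ->
     partial false u p * partial true v p - partial true u p * partial false v p <> 0).

(* Main.v *)
Require Import Defs.
From Stdlib Require Import Reals List.
From Coquelicot Require Import Coquelicot.
From Stdlib Require Import Lra Lia.
Open Scope R_scope.

Definition box (p : pt) (r : R) (q : pt) : Prop :=
  Rabs (fst q - fst p) < r /\ Rabs (snd q - snd p) < r.

Lemma open_box (U : pt -> Prop) (p : pt) : open U -> U p -> exists r, 0 < r /\ forall q, box p r q -> U q.
Proof.
  intros HU Hp. destruct (HU p Hp) as [eps He].
  exists eps. split. apply cond_pos.
  intros [q1 q2] [h1 h2]. apply He. destruct p as [p1 p2]. split; simpl in *; assumption.
Qed.

Lemma box_open (p : pt) (r : R) : open (box p r).
Proof.
  intros [q1 q2] [h1 h2]. simpl in h1, h2.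
  assert (e : 0 < Rmin (r - Rabs (q1 - fst p)) (r - Rabs (q2 - snd p))).
  { apply Rmin_glb_lt; lra. }
  exists (mkposreal _ e). intros [y1 y2] [b1 b2]. simpl in *.
  unfold ball in b1, b2; simpl in b1, b2. unfold AbsRing_ball, abs, minus, plus, opp in b1, b2; simpl in b1, b2.
  assert (m1 := Rmin_l (r - Rabs (q1 - fst p)) (r - Rabs (q2 - snd p))).
  assert (m2 := Rmin_r (r - Rabs (q1 - fst p)) (r - Rabs (q2 - snd p))).
  split; simpl.
  - replace (y1 - fst p) with ((y1 + - q1) + (q1 - fst p)) by ring.
    eapply Rle_lt_trans. apply Rabs_triang. lra.
  - replace (y2 - snd p) with ((y2 + - q2) + (q2 - snd p)) by ring.
    eapply Rle_lt_trans. apply Rabs_triang. lra.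
Qed.

Lemma coord_upd p i t : coord (upd p i t) i = t.
Proof. destruct i; reflexivity. Qed.
Lemma upd_upd p i t s : upd (upd p i t) i s = upd p i s.
Proof. destruct i; reflexivity. Qed.
Lemma upd_coord p i : upd p i (coord p i) = p.
Proof. destruct p; destruct i; reflexivity. Qed.

Lemma loc_line (U : pt -> Prop) (p : pt) (i : bool) : open U -> U p -> locally (coord p i) (fun t => U (upd p i t)).
Proof.
  intros HU Hp. destruct (open_box U p HU Hp) as [r [r0 Hr]].
  exists (mkposreal r r0). intros t Ht. apply Hr.
  unfold ball in Ht; simpl in Ht. unfold AbsRing_ball, abs, minus, plus, opp in Ht; simpl in Ht.
  destruct p as [p1 p2]; destruct i; unfold box; simpl in *;
  rewrite ?Rminus_eq_0, ?Rabs_R0; split; auto; lra.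
Qed.

Lemma partial_ext (U : pt -> Prop) (f h : pt -> R) (i : bool) (p : pt) : open U -> U p -> (forall q, U q -> f q = h q) ->
  partial i f p = partial i h p.
Proof.
  intros HU Hp E. unfold partial. apply Derive_ext_loc.
  generalize (loc_line U p i HU Hp). apply filter_imp. intros t Ht. apply E; auto.
Qed.

Lemma dpart_ext (U : pt -> Prop) (f h : pt -> R) (w : list bool) : open U -> (forall q, U q -> f q = h q) ->
  forall q, U q -> dpart w f q = dpart w h q.
Proof.
  intros HU E. induction w as [|i w IH]; intros q Hq; simpl. auto.
  apply partial_ext with U; auto.
Qed.

Lemma exd_ext (U : pt -> Prop) (f h : pt -> R) (i : bool) (p : pt) : open U -> U p -> (forall q, U q -> f q = h q) ->
  ex_derive (fun t => f (upd p i t)) (coord p i) -> ex_derive (fun t => h (upd p i t)) (coord p i).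
Proof.
  intros HU Hp E. apply ex_derive_ext_loc.
  generalize (loc_line U p i HU Hp). apply filter_imp. intros t Ht. apply E; auto.
Qed.

Lemma cont_ext (U : pt -> Prop) (f h : pt -> R) (p : pt) : open U -> U p -> (forall q, U q -> f q = h q) ->
  continuous f p -> continuous h p.
Proof.
  intros HU Hp E Hc. unfold continuous in *. rewrite <- (E p Hp).
  eapply filterlim_ext_loc; [|exact Hc].
  generalize (HU p Hp). apply filter_imp. auto.
Qed.

Lemma dpart_app (w w' : list bool) (f : pt -> R) : dpart (w ++ w') f = dpart w (dpart w' f).
Proof. induction w; simpl; congruence. Qed.

Lemma smooth_ext (U : pt -> Prop) (f h : pt -> R) : open U -> (forall q, U q -> f q = h q) -> smooth_on U f -> smooth_on U h.
Proof.
  intros HU E Hs w p Hp. destruct (Hs w p Hp) as [H1 H2]. split.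
  - intros i. apply exd_ext with U (dpart w f); auto. intros; apply dpart_ext with U; auto.
  - apply cont_ext with U (dpart w f); auto. intros; apply dpart_ext with U; auto.
Qed.

Lemma smooth_partial (U : pt -> Prop) (f : pt -> R) (i : bool) : smooth_on U f -> smooth_on U (partial i f).
Proof.
  intros Hs w p Hp. change (partial i f) with (dpart (i :: nil) f).
  rewrite <- dpart_app. apply Hs; auto.
Qed.

Lemma smooth_sub (U V : pt -> Prop) (f : pt -> R) : (forall q, V q -> U q) -> smooth_on U f -> smooth_on V f.
Proof. intros S Hs w p Hp. apply Hs; auto. Qed.

Lemma smooth_exd (U : pt -> Prop) (f : pt -> R) (p : pt) (i : bool) : smooth_on U f -> U p -> ex_derive (fun t => f (upd p i t)) (coord p i).
Proof. intros Hs Hp. apply (Hs nil p Hp). Qed.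
Lemma smooth_cont (U : pt -> Prop) (f : pt -> R) (p : pt) : smooth_on U f -> U p -> continuous f p.
Proof. intros Hs Hp. apply (Hs nil p Hp). Qed.

Definition Dv (i : bool) (f : pt -> R) (p : pt) (d : R) : Prop :=
  is_derive (fun t => f (upd p i t)) (coord p i) d.

Lemma D_partial i f p d : Dv i f p d -> partial i f p = d.
Proof. intro H. unfold partial. apply is_derive_unique. exact H. Qed.

Lemma D_exd i (f : pt -> R) p : ex_derive (fun t => f (upd p i t)) (coord p i) -> Dv i f p (partial i f p).
Proof. intro H. unfold Dv, partial. apply Derive_correct. exact H. Qed.

Lemma D_plus i (f h : pt -> R) p a b : Dv i f p a -> Dv i h p b -> Dv i (fun q => f q + h q) p (a + b).
Proof. intros Ha Hb. unfold Dv in *. apply (is_derive_plus _ _ _ _ _ Ha Hb). Qed.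

Lemma D_opp i (f : pt -> R) p a : Dv i f p a -> Dv i (fun q => - f q) p (- a).
Proof. intros Ha. unfold Dv in *. apply (is_derive_opp _ _ _ Ha). Qed.

Lemma D_minus i (f h : pt -> R) p a b : Dv i f p a -> Dv i h p b -> Dv i (fun q => f q - h q) p (a - b).
Proof. intros Ha Hb. unfold Dv in *. apply (is_derive_minus _ _ _ _ _ Ha Hb). Qed.

Lemma D_mult i (f h : pt -> R) p a b : Dv i f p a -> Dv i h p b -> Dv i (fun q => f q * h q) p (a * h p + f p * b).
Proof.
  intros Ha Hb. unfold Dv in *.
  pose proof (is_derive_mult _ _ _ _ _ Ha Hb Rmult_comm) as H.
  cbv beta in H. rewrite upd_coord in H. exact H.
Qed.

Lemma D_const i p (c : R) : Dv i (fun _ => c) p 0.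
Proof. unfold Dv. apply (is_derive_const c). Qed.

Lemma D_inv i (f : pt -> R) p a : Dv i f p a -> f p <> 0 -> Dv i (fun q => / f q) p (- a / (f p ^ 2)).
Proof.
  intros Ha Hn. unfold Dv in *.
  assert (Hn' : (fun t => f (upd p i t)) (coord p i) <> 0) by (simpl; rewrite upd_coord; auto).
  pose proof (is_derive_inv _ _ _ Ha Hn') as H. simpl in H. rewrite upd_coord in H. exact H.
Qed.

Lemma D_ext (U : pt -> Prop) i (f h : pt -> R) p d : open U -> U p -> (forall q, U q -> f q = h q) ->
  Dv i h p d -> Dv i f p d.
Proof.
  intros HU Hp E H. unfold Dv in *. apply is_derive_ext_loc with (fun t => h (upd p i t)); auto.
  generalize (loc_line U p i HU Hp). apply filter_imp. intros t Ht. symmetry; apply E; auto.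
Qed.

Inductive RS (U : pt -> Prop) : (pt -> R) -> Prop :=
| RS_base f : smooth_on U f -> RS U f
| RS_const c : RS U (fun _ => c)
| RS_plus f h : RS U f -> RS U h -> RS U (fun q => f q + h q)
| RS_mult f h : RS U f -> RS U h -> RS U (fun q => f q * h q)
| RS_inv f : RS U f -> (forall q, U q -> f q <> 0) -> RS U (fun q => / f q)
| RS_ext f h : RS U h -> (forall q, U q -> f q = h q) -> RS U f.

Section RSsec.
Variable U : pt -> Prop.
Hypothesis HU : open U.

Lemma RS_local f : RS U f -> forall p, U p ->
  (forall i, ex_derive (fun t => f (upd p i t)) (coord p i)) /\ continuous f p.
Proof.
  induction 1 as [f Hs|c|f h _ IHf _ IHh|f h _ IHf _ IHh|f _ IHf Hn|f h _ IHh E]; intros p Hp.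
  - split; [intro i; apply smooth_exd with U; auto | apply smooth_cont with U; auto].
  - split. intro i. apply ex_derive_const. apply continuous_const.
  - destruct (IHf p Hp) as [A1 A2]; destruct (IHh p Hp) as [B1 B2]. split.
    + intro i. apply (ex_derive_plus _ _ _ (A1 i) (B1 i)).
    + apply (continuous_plus f h p A2 B2).
  - destruct (IHf p Hp) as [A1 A2]; destruct (IHh p Hp) as [B1 B2]. split.
    + intro i. apply (ex_derive_mult _ _ _ (A1 i) (B1 i)).
    + apply (@continuous_mult _ R_AbsRing f h p A2 B2).
  - destruct (IHf p Hp) as [A1 A2]. split.
    + intro i. destruct (A1 i) as [a Ha]. exists (- a / (f p ^ 2)).
      apply D_inv; auto.
    + apply continuous_comp with (g := fun x : R => / x); auto.
      apply continuous_Rinv; auto.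
  - destruct (IHh p Hp) as [A1 A2]. split.
    + intro i. apply exd_ext with U h; auto. intros; symmetry; auto.
    + apply cont_ext with U h; auto. intros; symmetry; auto.
Qed.

Lemma RS_D f i p : RS U f -> U p -> Dv i f p (partial i f p).
Proof. intros H Hp. apply D_exd. apply (RS_local f H p Hp). Qed.

Lemma RS_partial f : RS U f -> forall i, RS U (partial i f).
Proof.
  induction 1 as [f Hs|c|f h Hf IHf Hh IHh|f h Hf IHf Hh IHh|f Hf IHf Hn|f h Hh IHh E]; intros i.
  - apply RS_base. apply smooth_partial; auto.
  - apply RS_ext with (fun _ => 0). apply RS_const. intros q _.
    apply D_partial. apply D_const.
  - apply RS_ext with (fun q => partial i f q + partial i h q). apply RS_plus; auto.
    intros q Hq. apply D_partial. apply D_plus; apply RS_D; auto.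
  - apply RS_ext with (fun q => partial i f q * h q + f q * partial i h q).
    apply RS_plus; apply RS_mult; auto.
    intros q Hq. apply D_partial. apply D_mult; apply RS_D; auto.
  - apply RS_ext with (fun q => (- partial i f q) * (/ f q * / f q)).
    apply RS_mult. apply RS_ext with (fun q => (-1) * partial i f q).
    apply RS_mult; auto. apply RS_const. intros; ring.
    apply RS_mult; apply RS_inv; auto.
    intros q Hq. apply D_partial. replace (- partial i f q * (/ f q * / f q)) with (- partial i f q / f q ^ 2).
    apply D_inv. apply RS_D; auto. auto. field. auto.
  - apply RS_ext with (partial i h). auto. intros q Hq. apply partial_ext with U; auto.
Qed.

Lemma RS_dpart f w : RS U f -> RS U (dpart w f).
Proof. intros H. induction w; simpl; auto. apply RS_partial; auto. Qed.

Lemma RS_smooth f : RS U f -> smooth_on U f.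
Proof.
  intros H w p Hp. apply RS_local; auto. apply RS_dpart; auto.
Qed.

End RSsec.

Lemma schwarz_smooth (U : pt -> Prop) (f : pt -> R) (p : pt) : open U -> smooth_on U f -> U p ->
  partial false (partial true f) p = partial true (partial false f) p.
Proof.
  intros HU Hs Hp. destruct (open_box U p HU Hp) as [r [r0 Hr]].
  destruct p as [x y].
  pose (F := fun a b => f (a, b)).
  assert (E1 : partial false (partial true f) (x, y) = Derive (fun z => Derive (fun t => F z t) y) x) by reflexivity.
  assert (E2 : partial true (partial false f) (x, y) = Derive (fun z => Derive (fun t => F t z) x) y) by reflexivity.
  rewrite E1, E2. apply Schwarz.
  - exists (mkposreal r r0). intros u v hu hv. simpl in hu, hv.
    assert (Uq : U (u, v)) by (apply Hr; split; simpl; auto).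
    split; [|split; [|split]].
    + exact (smooth_exd U f (u,v) false Hs Uq).
    + exact (smooth_exd U f (u,v) true Hs Uq).
    + exact (smooth_exd U (partial true f) (u,v) false (smooth_partial U f true Hs) Uq).
    + exact (smooth_exd U (partial false f) (u,v) true (smooth_partial U f false Hs) Uq).
  - apply continuity_2d_pt_filterlim.
    pose proof (smooth_cont U (partial false (partial true f)) (x,y) (smooth_partial U _ false (smooth_partial U f true Hs)) Hp) as C.
    unfold continuous in C. eapply filterlim_ext; [|exact C]. intros [a b]; reflexivity.
  - apply continuity_2d_pt_filterlim.
    pose proof (smooth_cont U (partial true (partial false f)) (x,y) (smooth_partial U _ true (smooth_partial U f false Hs)) Hp) as C.
    unfold continuous in C. eapply filterlim_ext; [|exact C]. intros [a b]; reflexivity.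
Qed.

Lemma schwarz_gen (U : pt -> Prop) (f : pt -> R) (p : pt) i j : open U -> smooth_on U f -> U p ->
  partial i (partial j f) p = partial j (partial i f) p.
Proof.
  intros. destruct i, j; auto. symmetry; apply schwarz_smooth with U; auto. apply schwarz_smooth with U; auto.
Qed.

Lemma D_div i (f h : pt -> R) p a b : Dv i f p a -> Dv i h p b -> h p <> 0 ->
  Dv i (fun q => f q / h q) p ((a * h p - f p * b) / h p ^ 2).
Proof.
  intros Ha Hb Hn. unfold Rdiv at 1.
  replace ((a * h p - f p * b) / h p ^ 2) with (a * / h p + f p * (- b / h p ^ 2)) by (field; auto).
  apply (D_mult i f (fun q => / h q) p). auto. apply D_inv; auto.
Qed.

Ltac dsolve := cbv beta;
  lazymatch goal with
  | |- Dv _ (fun q => @?A q + @?B q) _ _ => eapply (D_plus _ A B); [dsolve|dsolve]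
  | |- Dv _ (fun q => @?A q - @?B q) _ _ => eapply (D_minus _ A B); [dsolve|dsolve]
  | |- Dv _ (fun q => @?A q * @?B q) _ _ => eapply (D_mult _ A B); [dsolve|dsolve]
  | |- Dv _ (fun q => @?A q / @?B q) _ _ => eapply (D_div _ A B); [dsolve|dsolve|]
  | |- Dv _ (fun q => - @?A q) _ _ => eapply (D_opp _ A); dsolve
  | |- Dv _ (fun q => / @?A q) _ _ => eapply (D_inv _ A); [dsolve|]
  | |- Dv _ (fun q => ?F q) _ _ => match goal with HH : open ?UU |- _ => eapply (RS_D UU HH F) end
  | |- Dv _ ?F _ _ => match F with fun _ => ?c => exact (D_const _ _ c) end
  end.

Lemma RS_minus U f h : RS U f -> RS U h -> RS U (fun q => f q - h q).
Proof.
  intros. apply RS_ext with (fun q => f q + (-1) * h q). apply RS_plus; auto. apply RS_mult; auto. apply RS_const.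
  intros; ring.
Qed.
Lemma RS_opp U f : RS U f -> RS U (fun q => - f q).
Proof.
  intros. apply RS_ext with (fun q => (-1) * f q). apply RS_mult; auto. apply RS_const. intros; ring.
Qed.
Lemma RS_div U f h : RS U f -> RS U h -> (forall q, U q -> h q <> 0) -> RS U (fun q => f q / h q).
Proof.
  intros. apply RS_ext with (fun q => f q * / h q). apply RS_mult; auto. apply RS_inv; auto.
  intros; reflexivity.
Qed.

Ltac rs_struct base := cbv beta;
  lazymatch goal with
  | |- RS _ (fun q => @?A q + @?B q) => apply (RS_plus _ A B); [rs_struct base|rs_struct base]
  | |- RS _ (fun q => @?A q - @?B q) => apply (RS_minus _ A B); [rs_struct base|rs_struct base]
  | |- RS _ (fun q => @?A q * @?B q) => apply (RS_mult _ A B); [rs_struct base|rs_struct base]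
  | |- RS _ (fun q => @?A q / @?B q) => apply (RS_div _ A B); [rs_struct base|rs_struct base|]
  | |- RS _ (fun q => - @?A q) => apply (RS_opp _ A); rs_struct base
  | |- RS _ (fun q => / @?A q) => apply (RS_inv _ A); [rs_struct base|]
  | |- RS _ (fun q => ?F q) => base
  | |- RS _ ?F => match F with fun _ => ?c => apply RS_const end
  end.

Lemma lin_alg g00 g01 g11 b0 b1 r00 r01 r10 r11 :
  g00 * g11 - g01 * g01 <> 0 -> (b0 <> 0 \/ b1 <> 0) ->
  g00 * r00 + g01 * r10 = 0 ->
  g01 * r01 + g11 * r11 = 0 ->
  (g00 * r01 + g01 * r11) + (g01 * r00 + g11 * r10) = 0 ->
  b0 * r00 + b1 * r10 = 0 ->
  b0 * r01 + b1 * r11 = 0 ->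
  r00 = 0 /\ r01 = 0 /\ r10 = 0 /\ r11 = 0.
Proof.
  intros HD Hb e00 e11 e01 b0e b1e.
  set (D := g00 * g11 - g01 * g01) in *.
  set (c := g00 * r01 + g01 * r11).
  assert (E1 : r00 * D = g01 * c).
  { transitivity (g11 * (g00 * r00 + g01 * r10) - g01 * ((g00 * r01 + g01 * r11) + (g01 * r00 + g11 * r10)) + g01 * c).
    unfold D, c; ring. rewrite e00, e01; ring. }
  assert (E2 : r10 * D = - g00 * c).
  { transitivity (- g01 * (g00 * r00 + g01 * r10) + g00 * ((g00 * r01 + g01 * r11) + (g01 * r00 + g11 * r10)) - g00 * c).
    unfold D, c; ring. rewrite e00, e01; ring. }
  assert (E3 : r01 * D = g11 * c).
  { transitivity (g11 * c - g01 * (g01 * r01 + g11 * r11)). unfold D, c; ring. rewrite e11; ring. }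
  assert (E4 : r11 * D = - g01 * c).
  { transitivity (- g01 * c + g00 * (g01 * r01 + g11 * r11)). unfold D, c; ring. rewrite e11; ring. }
  assert (Hc : c = 0).
  { destruct (Req_dec c 0) as [|Hc]; auto. exfalso.
    assert (F1 : c * (b0 * g01 - b1 * g00) = 0).
    { apply (Rmult_eq_reg_r D); auto. transitivity ((b0 * r00 + b1 * r10) * D * D).
      - transitivity (b0 * (r00 * D) * D + b1 * (r10 * D) * D). 2: ring. rewrite E1, E2. ring.
      - rewrite b0e. ring. }
    assert (F2 : c * (b0 * g11 - b1 * g01) = 0).
    { apply (Rmult_eq_reg_r D); auto. transitivity ((b0 * r01 + b1 * r11) * D * D).
      - transitivity (b0 * (r01 * D) * D + b1 * (r11 * D) * D). 2: ring. rewrite E3, E4. ring.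
      - rewrite b1e. ring. }
    apply Rmult_integral in F1; destruct F1 as [F1|F1]; [contradiction|].
    apply Rmult_integral in F2; destruct F2 as [F2|F2]; [contradiction|].
    assert (Z0 : b0 * D = 0).
    { transitivity (g11 * (b0 * g01 - b1 * g00) * (-1) * 0 + (- g01) * 0 + 0 + b0 * D). ring.
      transitivity (- g01 * (b0 * g01 - b1 * g00) + g00 * (b0 * g11 - b1 * g01)). unfold D; ring.
      rewrite F1, F2; ring. }
    assert (Z1 : b1 * D = 0).
    { transitivity (- g11 * (b0 * g01 - b1 * g00) + g01 * (b0 * g11 - b1 * g01)). unfold D; ring.
      rewrite F1, F2; ring. }
    apply Rmult_integral in Z0; apply Rmult_integral in Z1.
    destruct Hb as [Hb|Hb]; [destruct Z0|destruct Z1]; contradiction. }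
  rewrite Hc in E1, E2, E3, E4.
  repeat split; apply (Rmult_eq_reg_r D); auto; [rewrite E1|rewrite E3|rewrite E2|rewrite E4]; ring.
Qed.

Lemma loc_box (q : pt) (P : pt -> Prop) : locally q P -> exists d, 0 < d /\ forall z, box q d z -> P z.
Proof.
  intros [eps He]. exists eps. split. apply cond_pos.
  intros [z1 z2] [h1 h2]. apply He. destruct q. split; simpl in *; assumption.
Qed.

Lemma box_loc (q : pt) (d : R) (P : pt -> Prop) : 0 < d -> (forall z, box q d z -> P z) -> locally q P.
Proof.
  intros Hd H. exists (mkposreal d Hd). intros [z1 z2] [h1 h2]. apply H. destruct q.
  split; simpl in *; assumption.
Qed.

Lemma ball_R (a b e : R) : ball a e b <-> Rabs (b - a) < e.
Proof. reflexivity. Qed.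

Lemma cont_line1 (f : pt -> R) x t : continuous f (x, t) -> continuous (fun s => f (x, s)) t.
Proof.
  intros C. apply filterlim_locally. intros eps.
  destruct (loc_box _ _ (proj1 (filterlim_locally f (f (x,t))) C eps)) as [d [Hd Hb]].
  exists (mkposreal d Hd). intros s Hs. apply Hb. split; simpl.
  rewrite Rminus_eq_0, Rabs_R0; auto. exact Hs.
Qed.

Lemma cont_line0 (f : pt -> R) x t : continuous f (x, t) -> continuous (fun s => f (s, t)) x.
Proof.
  intros C. apply filterlim_locally. intros eps.
  destruct (loc_box _ _ (proj1 (filterlim_locally f (f (x,t))) C eps)) as [d [Hd Hb]].
  exists (mkposreal d Hd). intros s Hs. apply Hb. split; simpl.
  exact Hs. rewrite Rminus_eq_0, Rabs_R0; auto.
Qed.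

Lemma cont_2d (h : pt -> R) x t : continuous h (x, t) -> continuity_2d_pt (fun u v => h (u, v)) x t.
Proof.
  intros C. apply continuity_2d_pt_filterlim. eapply filterlim_ext; [|exact C].
  intros [a b]; reflexivity.
Qed.

Lemma between_abs (a b c x0 r : R) : Rmin a b <= c <= Rmax a b -> Rabs (a - x0) < r -> Rabs (b - x0) < r ->
  Rabs (c - x0) < r /\ Rabs (c - a) <= Rabs (b - a).
Proof.
  intros [h1 h2] Ha Hb. apply Rabs_def2 in Ha. apply Rabs_def2 in Hb.
  unfold Rmin, Rmax in *. destruct (Rle_dec a b).
  - split. apply Rabs_def1; lra. rewrite !Rabs_right; lra.
  - split. apply Rabs_def1; lra. rewrite !Rabs_left1; lra.
Qed.

Lemma mvt2 (p : pt) (r : R) (f d0 d1 : pt -> R) :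
  (forall z, box p r z -> is_derive (fun s => f (s, snd z)) (fst z) (d0 z)) ->
  (forall z, box p r z -> is_derive (fun t => f (fst z, t)) (snd z) (d1 z)) ->
  forall q q', box p r q -> box p r q' ->
  exists s t, box p r (s, snd q') /\ box p r (fst q, t) /\
    Rabs (s - fst q) <= Rabs (fst q' - fst q) /\ Rabs (t - snd q) <= Rabs (snd q' - snd q) /\
    f q' - f q = d0 (s, snd q') * (fst q' - fst q) + d1 (fst q, t) * (snd q' - snd q).
Proof.
  intros H0 H1 [x y] [x' y'] [hx hy] [hx' hy']. simpl in *.
  assert (A0 : forall c, Rmin x x' <= c <= Rmax x x' -> box p r (c, y') /\ Rabs (c - x) <= Rabs (x' - x)).
  { intros c Hc. destruct (between_abs x x' c (fst p) r Hc hx hx'). split; auto. split; simpl; auto. }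
  assert (A1 : forall c, Rmin y y' <= c <= Rmax y y' -> box p r (x, c) /\ Rabs (c - y) <= Rabs (y' - y)).
  { intros c Hc. destruct (between_abs y y' c (snd p) r Hc hy hy'). split; auto. split; simpl; auto. }
  destruct (MVT_gen (fun s => f (s, y')) x x' (fun s => d0 (s, y'))) as [s [Hs Es]].
  { intros c Hc. apply (H0 (c, y')). apply A0. lra. }
  { intros c Hc. apply continuity_pt_filterlim. apply (ex_derive_continuous (fun s => f (s, y'))).
    eexists. apply (H0 (c, y')). apply A0. lra. }
  destruct (MVT_gen (fun t => f (x, t)) y y' (fun t => d1 (x, t))) as [t [Ht Et]].
  { intros c Hc. apply (H1 (x, c)). apply A1. lra. }
  { intros c Hc. apply continuity_pt_filterlim. apply (ex_derive_continuous (fun t => f (x, t))).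
    eexists. apply (H1 (x, c)). apply A1. lra. }
  destruct (A0 s Hs) as [B0 C0]. destruct (A1 t Ht) as [B1 C1].
  exists s, t. simpl. repeat split; try apply B0; try apply B1; auto.
  replace (f (x', y') - f (x, y)) with ((f (x', y') - f (x, y')) + (f (x, y') - f (x, y))) by ring.
  rewrite Es, Et. ring.
Qed.

Lemma box_sub (p q : pt) (r : R) : box p r q ->
  exists m, 0 < m /\ forall z, box q m z -> box p r z.
Proof.
  intros [h1 h2].
  exists (Rmin (r - Rabs (fst q - fst p)) (r - Rabs (snd q - snd p))). split.
  apply Rmin_glb_lt; lra.
  intros z [z1 z2].
  assert (m1 := Rmin_l (r - Rabs (fst q - fst p)) (r - Rabs (snd q - snd p))).
  assert (m2 := Rmin_r (r - Rabs (fst q - fst p)) (r - Rabs (snd q - snd p))).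
  split.
  - replace (fst z - fst p) with ((fst z - fst q) + (fst q - fst p)) by ring.
    eapply Rle_lt_trans. apply Rabs_triang. lra.
  - replace (snd z - snd p) with ((snd z - snd q) + (snd q - snd p)) by ring.
    eapply Rle_lt_trans. apply Rabs_triang. lra.
Qed.

Lemma cont_bound (d : pt -> R) (q : pt) : continuous d q ->
  exists del, 0 < del /\ forall z, box q del z -> Rabs (d z) <= Rabs (d q) + 1.
Proof.
  intros C.
  destruct (loc_box _ _ (proj1 (filterlim_locally d (d q)) C (mkposreal 1 Rlt_0_1))) as [del [Hd Hb]].
  exists del. split; auto. intros z Hz. specialize (Hb z Hz). simpl in Hb.
  change (Rabs (d z - d q) < 1) in Hb.
  replace (d z) with ((d z - d q) + d q) by ring. eapply Rle_trans. apply Rabs_triang. lra.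
Qed.

Lemma cont_from_partials (p : pt) (r : R) (f d0 d1 : pt -> R) (q : pt) :
  (forall z, box p r z -> is_derive (fun s => f (s, snd z)) (fst z) (d0 z)) ->
  (forall z, box p r z -> is_derive (fun t => f (fst z, t)) (snd z) (d1 z)) ->
  box p r q -> continuous d0 q -> continuous d1 q -> continuous f q.
Proof.
  intros H0 H1 Hq C0 C1.
  destruct (cont_bound d0 q C0) as [e0 [He0 B0]].
  destruct (cont_bound d1 q C1) as [e1 [He1 B1]].
  destruct (box_sub p q r Hq) as [m [Hm Sm]].
  set (M := Rabs (d0 q) + Rabs (d1 q) + 1).
  assert (HM : 0 < M) by (unfold M; pose proof (Rabs_pos (d0 q)); pose proof (Rabs_pos (d1 q)); lra).
  apply filterlim_locally. intros eps.
  set (rho := Rmin (Rmin e0 e1) (Rmin m (eps / (4 * M)))).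
  assert (Hrho : 0 < rho).
  { unfold rho. assert (0 < eps / (4 * M)) by (apply Rdiv_lt_0_compat; [apply cond_pos|lra]).
    repeat apply Rmin_glb_lt; auto. }
  assert (r1 : rho <= e0) by (unfold rho; eapply Rle_trans; [apply Rmin_l|apply Rmin_l]).
  assert (r2 : rho <= e1) by (unfold rho; eapply Rle_trans; [apply Rmin_l|apply Rmin_r]).
  assert (r3 : rho <= m) by (unfold rho; eapply Rle_trans; [apply Rmin_r|apply Rmin_l]).
  assert (r4 : rho <= eps / (4 * M)) by (unfold rho; eapply Rle_trans; [apply Rmin_r|apply Rmin_r]).
  apply (box_loc q rho); auto. intros z Hz.
  assert (Hzp : box p r z) by (apply Sm; destruct Hz; split; lra).
  destruct (mvt2 p r f d0 d1 H0 H1 q z Hq Hzp) as [s [t [Bs [Bt [Es [Et E]]]]]].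
  change (Rabs (f z - f q) < eps). rewrite E.
  destruct Hz as [z1 z2].
  assert (D0 : Rabs (d0 (s, snd z)) <= M).
  { eapply Rle_trans. apply B0. split; simpl; lra. unfold M; pose proof (Rabs_pos (d1 q)); lra. }
  assert (D1 : Rabs (d1 (fst q, t)) <= M).
  { eapply Rle_trans. apply B1. split; simpl. rewrite Rminus_eq_0, Rabs_R0; lra. lra.
    unfold M; pose proof (Rabs_pos (d0 q)); lra. }
  eapply Rle_lt_trans. apply Rabs_triang. rewrite !Rabs_mult.
  assert (P1 : Rabs (d0 (s, snd z)) * Rabs (fst z - fst q) <= M * rho).
  { apply Rmult_le_compat; try apply Rabs_pos; lra. }
  assert (P2 : Rabs (d1 (fst q, t)) * Rabs (snd z - snd q) <= M * rho).
  { apply Rmult_le_compat; try apply Rabs_pos; lra. }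
  assert (P3 : M * rho <= M * (eps / (4 * M))) by (apply Rmult_le_compat_l; lra).
  assert (P4 : M * (eps / (4 * M)) = eps / 4) by (field; lra).
  assert (0 < eps) by apply cond_pos.
  assert (P5 : M * rho < eps) by lra.
  lra.
Qed.

Section Poinc.
Variables (V : pt -> Prop) (a0 a1 : pt -> R) (p : pt) (r : R).
Hypothesis Hr : 0 < r.
Hypothesis Hbox : forall q, box p r q -> V q.
Hypothesis HV : open V.
Hypothesis S0 : smooth_on V a0.
Hypothesis S1 : smooth_on V a1.
Hypothesis Hcl : forall q, V q -> partial true a0 q = partial false a1 q.

Definition uP (q : pt) : R :=
  RInt (fun s => a0 (s, snd p)) (fst p) (fst q) + RInt (fun t => a1 (fst q, t)) (snd p) (snd q).

Lemma seg1 x y c : box p r (x, y) -> Rmin (snd p) y <= c <= Rmax (snd p) y -> box p r (x, c).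
Proof.
  intros [h1 h2] Hc. simpl in *. split; simpl; auto.
  destruct (between_abs (snd p) y c (snd p) r Hc); auto. rewrite Rminus_eq_0, Rabs_R0; auto.
Qed.

Lemma seg0 x y c : box p r (x, y) -> Rmin (fst p) x <= c <= Rmax (fst p) x -> box p r (c, snd p).
Proof.
  intros [h1 h2] Hc. simpl in *. split; simpl; auto.
  destruct (between_abs (fst p) x c (fst p) r Hc); auto. rewrite Rminus_eq_0, Rabs_R0; auto.
  rewrite Rminus_eq_0, Rabs_R0; auto.
Qed.

Lemma a1_line_cont x c : box p r (x, c) -> continuous (fun t => a1 (x, t)) c.
Proof. intros B. apply cont_line1. apply (smooth_cont V a1); auto. Qed.
Lemma a0_line_cont0 c y : box p r (c, y) -> continuous (fun s => a0 (s, y)) c.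
Proof. intros B. apply cont_line0. apply (smooth_cont V a0); auto. Qed.

Lemma uP_d1 q : box p r q -> is_derive (fun t => uP (fst q, t)) (snd q) (a1 q).
Proof.
  destruct q as [x y]. intros Bq. unfold uP; simpl.
  replace (a1 (x, y)) with (0 + a1 (x, y)) by ring.
  apply (is_derive_plus (fun _ => RInt (fun s => a0 (s, snd p)) (fst p) x) (fun t => RInt (fun t0 => a1 (x, t0)) (snd p) t)).
  exact (is_derive_const (K:=R_AbsRing) _ _).
  apply (is_derive_RInt (fun t0 => a1 (x, t0)) (fun t => RInt (fun t0 => a1 (x, t0)) (snd p) t) (snd p) y).
  - destruct (box_sub p (x,y) r Bq) as [m [Hm Sm]].
    exists (mkposreal m Hm). intros b Hb. apply (RInt_correct (V := R_CompleteNormedModule)). apply (ex_RInt_continuous (V := R_CompleteNormedModule)).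
    intros c Hc. apply a1_line_cont. apply (seg1 x b). apply Sm. split; simpl.
    rewrite Rminus_eq_0, Rabs_R0; auto. exact Hb. auto.
  - apply a1_line_cont; auto.
Qed.

Lemma uP_d0 q : box p r q -> is_derive (fun s => uP (s, snd q)) (fst q) (a0 q).
Proof.
  destruct q as [x y]. intros Bq. unfold uP; simpl.
  destruct (box_sub p (x,y) r Bq) as [m [Hm Sm]].
  assert (Bx : forall s, Rabs (s - x) < m -> box p r (s, y)).
  { intros s Hs. apply Sm. split; simpl; auto. rewrite Rminus_eq_0, Rabs_R0; auto. }
  assert (E : RInt (fun t => Derive (fun u => a1 (u, t)) x) (snd p) y = a0 (x, y) - a0 (x, snd p)).
  { rewrite (RInt_ext _ (Derive (fun t => a0 (x, t)))).
    - apply (RInt_Derive (fun t => a0 (x, t))).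
      + intros c Hc. exact (smooth_exd V a0 (x, c) true S0 (Hbox _ (seg1 x y c Bq Hc))).
      + intros c Hc. apply (cont_line1 (partial true a0) x c).
        apply (smooth_cont V (partial true a0)). apply smooth_partial; auto. apply Hbox. apply (seg1 x y c Bq Hc).
    - intros c Hc. assert (Hc' : Rmin (snd p) y <= c <= Rmax (snd p) y) by lra.
      change (partial false a1 (x, c) = partial true a0 (x, c)). symmetry. apply Hcl.
      apply Hbox. apply (seg1 x y c Bq Hc'). }
  replace (a0 (x, y)) with (a0 (x, snd p) + RInt (fun t => Derive (fun u => a1 (u, t)) x) (snd p) y) by (rewrite E; ring).
  apply (is_derive_plus (fun s => RInt (fun s0 => a0 (s0, snd p)) (fst p) s) (fun s => RInt (fun t0 => a1 (s, t0)) (snd p) y)).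
  - apply (is_derive_RInt (fun s0 => a0 (s0, snd p)) (fun s => RInt (fun s0 => a0 (s0, snd p)) (fst p) s) (fst p) x).
    + exists (mkposreal m Hm). intros b Hb. apply (RInt_correct (V := R_CompleteNormedModule)). apply (ex_RInt_continuous (V := R_CompleteNormedModule)).
      intros c Hc. apply a0_line_cont0. apply (seg0 b y). apply Bx. exact Hb. auto.
    + apply a0_line_cont0. apply (seg0 x y); auto. split; [apply Rmin_r|apply Rmax_r].
  - apply (is_derive_RInt_param (fun s t => a1 (s, t)) (snd p) y x).
    + exists (mkposreal m Hm). intros s Hs t Ht.
      exact (smooth_exd V a1 (s, t) false S1 (Hbox _ (seg1 s y t (Bx s Hs) Ht))).
    + intros t Ht. apply (cont_2d (partial false a1) x t).
      apply (smooth_cont V (partial false a1)). apply smooth_partial; auto. apply Hbox. apply (seg1 x y t Bq Ht).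
    + exists (mkposreal m Hm). intros s Hs. apply (ex_RInt_continuous (V := R_CompleteNormedModule)).
      intros c Hc. apply a1_line_cont. apply (seg1 s y c (Bx s Hs) Hc).
Qed.

End Poinc.

Lemma abs6 a b c d e f : Rabs (a + b + c - (d + e + f)) <= Rabs a + Rabs b + Rabs c + Rabs d + Rabs e + Rabs f.
Proof.
  unfold Rminus. eapply Rle_trans. apply Rabs_triang. rewrite Rabs_Ropp.
  pose proof (Rabs_triang (a + b) c). pose proof (Rabs_triang a b).
  pose proof (Rabs_triang (d + e) f). pose proof (Rabs_triang d e). lra.
Qed.

Lemma det_pert A B C D A' B' C' D' eps :
  0 < eps <= 1 -> eps * (Rabs A + Rabs B + Rabs C + Rabs D + 2) * 2 <= Rabs (A * D - B * C) ->
  A * D - B * C <> 0 ->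
  Rabs (A' - A) < eps -> Rabs (B' - B) < eps -> Rabs (C' - C) < eps -> Rabs (D' - D) < eps ->
  A' * D' - B' * C' <> 0.
Proof.
  intros He Hb HD h1 h2 h3 h4 Z.
  set (e1 := A' - A) in *. set (e2 := B' - B) in *. set (e3 := C' - C) in *. set (e4 := D' - D) in *.
  assert (E : A * D - B * C = - (A * e4 + e1 * D + e1 * e4 - (B * e3 + e2 * C + e2 * e3))).
  { transitivity (A * D - B * C - (A' * D' - B' * C')). rewrite Z; ring. unfold e1, e2, e3, e4; ring. }
  assert (B6 := abs6 (A * e4) (e1 * D) (e1 * e4) (B * e3) (e2 * C) (e2 * e3)).
  rewrite !Rabs_mult in B6.
  assert (q1 : Rabs A * Rabs e4 <= Rabs A * eps) by (apply Rmult_le_compat_l; [apply Rabs_pos|lra]).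
  assert (q2 : Rabs e1 * Rabs D <= eps * Rabs D) by (apply Rmult_le_compat_r; [apply Rabs_pos|lra]).
  assert (q3 : Rabs e1 * Rabs e4 <= eps * eps) by (apply Rmult_le_compat; try apply Rabs_pos; lra).
  assert (q4 : Rabs B * Rabs e3 <= Rabs B * eps) by (apply Rmult_le_compat_l; [apply Rabs_pos|lra]).
  assert (q5 : Rabs e2 * Rabs C <= eps * Rabs C) by (apply Rmult_le_compat_r; [apply Rabs_pos|lra]).
  assert (q6 : Rabs e2 * Rabs e3 <= eps * eps) by (apply Rmult_le_compat; try apply Rabs_pos; lra).
  assert (q7 : eps * eps <= eps * 1) by (apply Rmult_le_compat_l; lra).
  assert (HA : Rabs (A * D - B * C) <= eps * (Rabs A + Rabs B + Rabs C + Rabs D + 2)).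
  { rewrite E, Rabs_Ropp. lra. }
  assert (0 < Rabs (A * D - B * C)) by (apply Rabs_pos_lt; auto).
  lra.
Qed.

Lemma solve22 A B C D x y : A * D - B * C <> 0 -> A * x + B * y = 0 -> C * x + D * y = 0 -> x = 0 /\ y = 0.
Proof.
  intros HD e1 e2. split.
  - apply (Rmult_eq_reg_r (A * D - B * C)); auto.
    transitivity (D * (A * x + B * y) - B * (C * x + D * y)). ring. rewrite e1, e2; ring.
  - apply (Rmult_eq_reg_r (A * D - B * C)); auto.
    transitivity (A * (C * x + D * y) - C * (A * x + B * y)). ring. rewrite e1, e2; ring.
Qed.

Lemma list_last_dec (w : list bool) : w = nil \/ exists w' j, w = w' ++ j :: nil.
Proof.
  destruct w as [|b w]. auto. right. destruct (exists_last (l := b :: w)) as [w' [j E]]. discriminate.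
  exists w', j. exact E.
Qed.

Lemma coords_exist (V : pt -> Prop) (a0 a1 v : pt -> R) (p : pt) :
  open V -> V p -> smooth_on V a0 -> smooth_on V a1 -> smooth_on V v ->
  (forall q, V q -> partial true a0 q = partial false a1 q) ->
  a0 p * partial true v p - a1 p * partial false v p <> 0 ->
  exists (W : pt -> Prop) (u : pt -> R), open W /\ W p /\ (forall q, W q -> V q) /\ smooth_on W u /\
    (forall q, W q -> partial false u q = a0 q /\ partial true u q = a1 q) /\
    (forall q q', W q -> W q' -> u q = u q' -> v q = v q' -> q = q').
Proof.
  intros HV Vp S0 S1 Sv Hcl HJ.
  destruct (open_box V p HV Vp) as [r [Hr Hbox]].
  set (u := uP a0 a1 p).
  assert (D0 : forall z, box p r z -> is_derive (fun s => u (s, snd z)) (fst z) (a0 z)).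
  { intros z Bz. eapply uP_d0; eauto. }
  assert (D1 : forall z, box p r z -> is_derive (fun t => u (fst z, t)) (snd z) (a1 z)).
  { intros z Bz. eapply uP_d1; eauto. }
  assert (P0 : forall z, box p r z -> partial false u z = a0 z).
  { intros [x y] Bz. apply is_derive_unique. exact (D0 (x, y) Bz). }
  assert (P1 : forall z, box p r z -> partial true u z = a1 z).
  { intros [x y] Bz. apply is_derive_unique. exact (D1 (x, y) Bz). }
  assert (Hbo := box_open p r).
  assert (Su : smooth_on (box p r) u).
  { intros w q Bq. destruct (list_last_dec w) as [->|[w' [j ->]]].
    - simpl. split.
      + intros [|]; destruct q as [x y]; eexists; [exact (D1 (x,y) Bq)|exact (D0 (x,y) Bq)].
      + apply (cont_from_partials p r u a0 a1 q D0 D1 Bq).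
        apply (smooth_cont V a0); auto. apply (smooth_cont V a1); auto.
    - rewrite dpart_app. simpl.
      assert (Sj : smooth_on (box p r) (partial j u)).
      { destruct j.
        - apply (smooth_ext (box p r) a1); auto. intros; symmetry; auto. apply (smooth_sub V); auto.
        - apply (smooth_ext (box p r) a0); auto. intros; symmetry; auto. apply (smooth_sub V); auto. }
      apply Sj; auto. }
  set (A := a0 p). set (B := a1 p). set (C := partial false v p). set (D := partial true v p).
  assert (HD : A * D - B * C <> 0) by (unfold A, B, C, D; lra).
  set (K := Rabs A + Rabs B + Rabs C + Rabs D + 2).
  assert (HK : 0 < K) by (unfold K; pose proof (Rabs_pos A); pose proof (Rabs_pos B);
     pose proof (Rabs_pos C); pose proof (Rabs_pos D); lra).
  assert (HDp : 0 < Rabs (A * D - B * C)) by (apply Rabs_pos_lt; auto).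
  set (eps := Rmin 1 (Rabs (A * D - B * C) / (2 * K))).
  assert (He : 0 < eps <= 1).
  { unfold eps. split. apply Rmin_glb_lt. lra. apply Rdiv_lt_0_compat; lra. apply Rmin_l. }
  assert (Heb : eps * K * 2 <= Rabs (A * D - B * C)).
  { assert (eps <= Rabs (A * D - B * C) / (2 * K)) by apply Rmin_r.
    apply (Rmult_le_compat_r (K * 2)) in H; [|lra].
    replace (Rabs (A * D - B * C) / (2 * K) * (K * 2)) with (Rabs (A * D - B * C)) in H by (field; lra).
    lra. }
  assert (Hc : forall f : pt -> R, continuous f p -> exists d, 0 < d /\ forall z, box p d z -> Rabs (f z - f p) < eps).
  { intros f Cf. destruct (loc_box _ _ (proj1 (filterlim_locally f (f p)) Cf (mkposreal eps (proj1 He)))) as [d [Hd Hb]].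
    exists d. split; [exact Hd|intros z Hz; exact (Hb z Hz)]. }
  destruct (Hc a0 (smooth_cont V a0 p S0 Vp)) as [d0 [Hd0 B0]].
  destruct (Hc a1 (smooth_cont V a1 p S1 Vp)) as [d1 [Hd1 B1]].
  destruct (Hc (partial false v) (smooth_cont V _ p (smooth_partial V v false Sv) Vp)) as [d2 [Hd2 B2]].
  destruct (Hc (partial true v) (smooth_cont V _ p (smooth_partial V v true Sv) Vp)) as [d3 [Hd3 B3]].
  set (r' := Rmin (Rmin r d0) (Rmin d1 (Rmin d2 d3))).
  assert (Hr' : 0 < r') by (unfold r'; repeat apply Rmin_glb_lt; auto).
  assert (Sub : forall d z, r' <= d -> box p r' z -> box p d z).
  { intros d z Hd [z1 z2]. split; lra. }
  assert (l0 : r' <= r) by (unfold r'; eapply Rle_trans; [apply Rmin_l|apply Rmin_l]).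
  assert (l1 : r' <= d0) by (unfold r'; eapply Rle_trans; [apply Rmin_l|apply Rmin_r]).
  assert (l2 : r' <= d1) by (unfold r'; eapply Rle_trans; [apply Rmin_r|apply Rmin_l]).
  assert (l3 : r' <= d2) by (unfold r'; eapply Rle_trans; [apply Rmin_r|]; eapply Rle_trans; [apply Rmin_r|apply Rmin_l]).
  assert (l4 : r' <= d3) by (unfold r'; eapply Rle_trans; [apply Rmin_r|]; eapply Rle_trans; [apply Rmin_r|apply Rmin_r]).
  exists (box p r'), u. split; [apply box_open|]. split.
  { split; rewrite Rminus_eq_0, Rabs_R0; auto. }
  split. { intros q Hq. apply Hbox, (Sub r); auto. }
  split. { apply (smooth_sub (box p r)); [intros q Hq; apply (Sub r); auto | exact Su]. }
  split. { intros q Hq. split; [apply P0|apply P1]; apply (Sub r); auto. }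
  intros q q' Wq Wq' Eu Ev.
  assert (DV0 : forall z, box p r' z -> is_derive (fun s => v (s, snd z)) (fst z) (partial false v z)).
  { intros [x y] Bz. apply Derive_correct. exact (smooth_exd V v (x,y) false Sv (Hbox _ (Sub r _ l0 Bz))). }
  assert (DV1 : forall z, box p r' z -> is_derive (fun t => v (fst z, t)) (snd z) (partial true v z)).
  { intros [x y] Bz. apply Derive_correct. exact (smooth_exd V v (x,y) true Sv (Hbox _ (Sub r _ l0 Bz))). }
  assert (D0' : forall z, box p r' z -> is_derive (fun s => u (s, snd z)) (fst z) (a0 z)) by (intros; apply D0, (Sub r); auto).
  assert (D1' : forall z, box p r' z -> is_derive (fun t => u (fst z, t)) (snd z) (a1 z)) by (intros; apply D1, (Sub r); auto).
  destruct (mvt2 p r' u a0 a1 D0' D1' q q' Wq Wq') as [s [t [Bs [Bt [_ [_ Eu']]]]]].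
  destruct (mvt2 p r' v _ _ DV0 DV1 q q' Wq Wq') as [s' [t' [Bs' [Bt' [_ [_ Ev']]]]]].
  rewrite Eu, Rminus_eq_0 in Eu'. rewrite Ev, Rminus_eq_0 in Ev'.
  assert (ND : a0 (s, snd q') * partial true v (fst q, t') - a1 (fst q, t) * partial false v (s', snd q') <> 0).
  { apply (det_pert A B C D) with eps; [exact He|exact Heb|exact HD|apply B0, (Sub d0); auto|
      apply B1, (Sub d1); auto|apply B2, (Sub d2); auto|apply B3, (Sub d3); auto]. }
  destruct (solve22 _ _ _ _ (fst q' - fst q) (snd q' - snd q) ND) as [Ex Ey]; try lra.
  destruct q as [x y], q' as [x' y']. simpl in *. f_equal; lra.
Qed.

Section Main.
Variable U : pt -> Prop.
Variable g : metric.
Variable psi : pt -> R.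
Hypothesis HU : open U.
Hypothesis Hgs : forall i j, smooth_on U (g i j).
Hypothesis Hsym : forall i j p, U p -> g i j p = g j i p.
Hypothesis Hdet : forall p, U p -> mdet g p < 0.
Hypothesis Hpsi : smooth_on U psi.

Lemma det_ne p : U p -> mdet g p <> 0.
Proof. intro H; specialize (Hdet p H); lra. Qed.

Lemma RS_g i j : RS U (g i j). Proof. apply RS_base; auto. Qed.
Lemma RS_mdet : RS U (mdet g).
Proof.
  unfold mdet. apply RS_ext with (fun q => g false false q * g true true q + (-1) * (g false true q * g true false q)).
  repeat first [apply RS_plus | apply RS_mult | apply RS_const | apply RS_g].
  intros; ring.
Qed.
Lemma RS_psi : RS U psi. Proof. apply RS_base; auto. Qed.

Ltac rsolve0 := first [apply RS_g | apply RS_psi | apply RS_mdet | apply (RS_partial U HU); rsolve0].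

Lemma RS_chr m i j : RS U (christoffel g m i j).
Proof.
  destruct m, i, j; unfold christoffel, ginv, sum2; cbn [Bool.eqb negb];
  rs_struct rsolve0; intros q Uq; first [apply det_ne; auto | lra].
Qed.

Definition HGfun i j := fun q => sum2 (fun m => christoffel g m i j q * partial m psi q).
Definition CPfun k i j := fun q => sum2 (fun n => g i n q * christoffel g n k j q + g j n q * christoffel g n k i q).

Ltac rsolve := first [apply RS_g | apply RS_psi | apply RS_mdet | apply RS_chr | apply (RS_partial U HU); rsolve].

Lemma dg_sym p k i j : U p -> partial k (g i j) p = partial k (g j i) p.
Proof. intros Up. apply partial_ext with U; auto. Qed.

Lemma H_sym p : U p -> partial true (partial false psi) p = partial false (partial true psi) p.
Proof. intros Up. symmetry. apply schwarz_smooth with U; auto. Qed.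

Definition Nfun (q : pt) : R :=
  sum2 (fun i => sum2 (fun j => ginv g i j q * partial i psi q * partial j psi q)).

Ltac dfin := first [rsolve | assumption | apply det_ne; assumption].

Ltac dcomp F :=
  let H := fresh in
  match goal with |- context [partial ?i F ?p] =>
    eassert (H : Dv i F p _); [ (unfold HGfun, CPfun, Nfun, grad, ginv, sum2, mdet; cbn [Bool.eqb negb]; dsolve; dfin) | ];
    rewrite (D_partial _ _ _ _ H); clear H
  end.

Ltac dcomp_all :=
  repeat match goal with
  | |- context [partial ?i (grad g psi ?k) ?p] => dcomp (grad g psi k)
  | |- context [partial ?i Nfun ?p] => dcomp Nfun
  end.

Ltac symnorm p Up :=
  repeat first [ rewrite (Hsym true false p Up) | rewrite (dg_sym p _ true false Up) | rewrite (H_sym p Up) ].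



Lemma lam_zero_k p lam k : U p ->
  lam * partial k psi p = partial k Nfun p -
   (grad g psi false p * (lie_metric g (grad g psi) k false p - lam * g k false p) +
    grad g psi true p * (lie_metric g (grad g psi) k true p - lam * g k true p)).
Proof.
  intros Up. assert (Hd := det_ne p Up). unfold mdet in Hd. rewrite (Hsym true false p Up) in Hd.
  unfold lie_metric, sum2. cbv beta.
  destruct k; dcomp_all; unfold grad, ginv, sum2, mdet; cbn [Bool.eqb negb]; symnorm p Up; field; exact Hd.
Qed.

Lemma lie_identity p i j : U p ->
  lie_metric g (grad g psi) i j p =
  2 * (partial i (partial j psi) p - sum2 (fun m => christoffel g m i j p * partial m psi p)).
Proof.
  intros Up. assert (Hd := det_ne p Up). unfold mdet in Hd. rewrite (Hsym true false p Up) in Hd.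
  unfold lie_metric, sum2. cbv beta.
  destruct i, j; dcomp_all; unfold christoffel, grad, ginv, sum2, mdet; cbn [Bool.eqb negb]; symnorm p Up; field; exact Hd.
Qed.

Lemma lam_zero p lam : U p ->
  (forall i j, lie_metric g (grad g psi) i j p = lam * g i j p) ->
  (forall q, U q -> Nfun q = 0) -> (exists i, partial i psi p <> 0) -> lam = 0.
Proof.
  intros Up Hck HN [i Hi].
  assert (dN : forall k, partial k Nfun p = 0).
  { intro k. rewrite (partial_ext U Nfun (fun _ => 0) k p HU Up HN). apply D_partial, D_const. }
  assert (E := lam_zero_k p lam i Up). rewrite dN, !Hck in E.
  assert (lam * partial i psi p = 0) by (rewrite E; ring).
  apply Rmult_integral in H. destruct H; auto. contradiction.
Qed.

Lemma hess_gamma p i j : U p ->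
  (forall i j, lie_metric g (grad g psi) i j p = 0 * g i j p) ->
  partial i (partial j psi) p = sum2 (fun m => christoffel g m i j p * partial m psi p).
Proof.
  intros Up Hck. specialize (Hck i j). rewrite lie_identity in Hck; auto. lra.
Qed.

Lemma chr_sym q m : U q -> christoffel g m true false q = christoffel g m false true q.
Proof.
  intros Uq. unfold christoffel, sum2. destruct m; symnorm q Uq; ring.
Qed.

Lemma dchr_sym p k m : U p -> partial k (christoffel g m true false) p = partial k (christoffel g m false true) p.
Proof. intros Up. apply partial_ext with U; auto. intros; apply chr_sym; auto. Qed.

Lemma compat q k i j : U q -> partial k (g i j) q = CPfun k i j q.
Proof.
  intros Uq. assert (Hd := det_ne q Uq). unfold mdet in Hd. rewrite (Hsym true false q Uq) in Hd.
  unfold CPfun, christoffel, ginv, sum2, mdet; destruct k, i, j; cbn [Bool.eqb negb]; symnorm q Uq; field; exact Hd.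
Qed.

Ltac chrnorm p Up :=
  repeat first [ rewrite (chr_sym p _ Up) | rewrite (dchr_sym p _ _ Up) ].

Lemma beta_contr p j :
  (forall q, U q -> forall i j, partial i (partial j psi) q = HGfun i j q) -> U p ->
  sum2 (fun n => partial n psi p * riemann g n j false true p) = 0.
Proof.
  intros HG Up.
  assert (T := schwarz_smooth U (partial j psi) p HU (smooth_partial U psi j Hpsi) Up).
  rewrite (partial_ext U (partial true (partial j psi)) (HGfun true j) false p HU Up) in T by (intros; apply HG; auto).
  rewrite (partial_ext U (partial false (partial j psi)) (HGfun false j) true p HU Up) in T by (intros; apply HG; auto).
  revert T. dcomp (HGfun true j). dcomp (HGfun false j).
  rewrite !(HG p Up). unfold HGfun, riemann, sum2. cbv beta. intro T.
  destruct j; chrnorm p Up; revert T; chrnorm p Up; intro T; lra.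
Qed.

Lemma lower_antisym p i j : U p ->
  sum2 (fun n => g i n p * riemann g n j false true p + g j n p * riemann g n i false true p) = 0.
Proof.
  intros Up.
  assert (T := schwarz_smooth U (g i j) p HU (Hgs i j) Up).
  rewrite (partial_ext U (partial true (g i j)) (CPfun true i j) false p HU Up) in T by (intros; apply compat; auto).
  rewrite (partial_ext U (partial false (g i j)) (CPfun false i j) true p HU Up) in T by (intros; apply compat; auto).
  revert T. dcomp (CPfun true i j). dcomp (CPfun false i j).
  rewrite !(compat p _ _ _ Up). unfold CPfun, riemann, sum2. cbv beta.
  destruct i, j; symnorm p Up; chrnorm p Up; intro T; lra.
Qed.

Lemma flat_pt p :
  (forall q, U q -> forall i j, partial i (partial j psi) q = HGfun i j q) -> U p ->
  (exists i, partial i psi p <> 0) -> forall l i j k, riemann g l i j k p = 0.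
Proof.
  intros HG Up Hnv.
  assert (Hd := det_ne p Up). unfold mdet in Hd. rewrite (Hsym true false p Up) in Hd.
  assert (e00 := lower_antisym p false false Up).
  assert (e11 := lower_antisym p true true Up).
  assert (e01 := lower_antisym p false true Up).
  assert (b0 := beta_contr p false HG Up).
  assert (b1 := beta_contr p true HG Up).
  unfold sum2 in e00, e11, e01, b0, b1. rewrite (Hsym true false p Up) in e11, e01.
  destruct (lin_alg (g false false p) (g false true p) (g true true p) (partial false psi p) (partial true psi p)
    (riemann g false false false true p) (riemann g false true false true p)
    (riemann g true false false true p) (riemann g true true false true p)) as [r00 [r01 [r10 r11]]]; try lra.
  { destruct Hnv as [[|] Hi]; auto. }
  intros l i j k. destruct j, k.
  - unfold riemann, sum2; ring.
  - assert (E : riemann g l i true false p = - riemann g l i false true p) by (unfold riemann, sum2; ring).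
    rewrite E. destruct l, i; rewrite ?r00, ?r01, ?r10, ?r11; ring.
  - destruct l, i; auto.
  - unfold riemann, sum2; ring.
Qed.

Definition alpha (c i : bool) (q : pt) : R :=
  if Bool.eqb i c then g c c q / partial c psi q
  else (2 * g c (negb c) q * partial c psi q - g c c q * partial (negb c) psi q) / (partial c psi q * partial c psi q).

Lemma num_zero q : U q -> Nfun q = 0 ->
  g true true q * partial false psi q * partial false psi q
  - 2 * g false true q * partial false psi q * partial true psi q
  + g false false q * partial true psi q * partial true psi q = 0.
Proof.
  intros Uq HN. assert (Hd := det_ne q Uq). unfold mdet in Hd. rewrite (Hsym true false q Uq) in Hd.
  transitivity (Nfun q * (g false false q * g true true q - g false true q * g false true q)).
  - unfold Nfun, ginv, sum2, mdet; cbn [Bool.eqb negb]. symnorm q Uq. field. exact Hd.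
  - rewrite HN; ring.
Qed.

Section Closed.
Hypothesis HN : forall q, U q -> Nfun q = 0.
Hypothesis HG : forall q, U q -> forall i j, partial i (partial j psi) q = HGfun i j q.

Ltac dfin2 := first [dfin | apply Rmult_integral_contrapositive_currified; assumption].

Ltac dcompA F :=
  let H := fresh in
  match goal with |- context [partial ?i F ?p] =>
    eassert (H : Dv i F p _); [ (unfold alpha; cbn [Bool.eqb negb]; dsolve; dfin2) | ];
    rewrite (D_partial _ _ _ _ H); clear H
  end.

Lemma alpha_props_true q : U q -> partial true psi q <> 0 ->
  partial false (alpha true true) q = partial true (alpha true false) q /\
  (forall i j, g i j q = / 2 * (alpha true i q * partial j psi q + alpha true j q * partial i psi q)) /\
  alpha true false q * partial true psi q - alpha true true q * partial false psi q <> 0.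
Proof.
  intros Uq Hb.
  assert (Hd := det_ne q Uq). unfold mdet in Hd. rewrite (Hsym true false q Uq) in Hd.
  assert (Hn := num_zero q Uq (HN q Uq)).
  assert (Hg00 : g false false q = (2 * g false true q * partial false psi q * partial true psi q
     - g true true q * partial false psi q * partial false psi q) / (partial true psi q * partial true psi q)).
  { apply (Rmult_eq_reg_r (partial true psi q * partial true psi q)).
    2: apply Rmult_integral_contrapositive_currified; auto.
    field_simplify; [lra|auto]. }
  set (k := g true true q * partial false psi q - g false true q * partial true psi q).
  assert (Hk : k <> 0).
  { intro Z. apply Hd. rewrite Hg00.
    replace (g false true q) with (g true true q * partial false psi q / partial true psi q).
    field; auto. apply (Rmult_eq_reg_r (partial true psi q)); auto. field_simplify; [|auto].
    unfold k in Z. lra. }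
  assert (Hg01 : g false true q = (g true true q * partial false psi q - k) / partial true psi q).
  { unfold k. field; auto. }
  clearbody k.
  assert (side : forall P : R, P = - (k * k) -> P <> 0).
  { intros P E Z. apply Hk. rewrite E in Z. assert (KK : k * k = 0) by lra.
    destruct (Rmult_integral _ _ KK); auto. }
  split; [|split].
  - dcompA (alpha true true). dcompA (alpha true false).
    rewrite !(HG q Uq). unfold HGfun, christoffel, ginv, sum2, mdet; cbn [Bool.eqb negb].
    symnorm q Uq. rewrite Hg00. rewrite Hg01. field. split; [auto|]. apply side; ring.
  - intros i j. unfold alpha. destruct i, j; cbn [Bool.eqb negb]; symnorm q Uq;
    try rewrite Hg00; rewrite ?Hg01; field; auto.
  - unfold alpha; cbn [Bool.eqb negb]. symnorm q Uq. rewrite Hg01.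
    replace ((2 * ((g true true q * partial false psi q - k) / partial true psi q) * partial true psi q -
      g true true q * partial false psi q) / (partial true psi q * partial true psi q) * partial true psi q -
      g true true q / partial true psi q * partial false psi q) with (- 2 * k / partial true psi q) by (field; auto).
    intro Z. apply Hk. apply (Rmult_eq_reg_r (- 2 / partial true psi q)).
    rewrite Rmult_0_l. rewrite <- Z. field. auto.
    intro Z'. apply Rmult_integral in Z'. destruct Z' as [Z'|Z']. lra. apply Rinv_neq_0_compat in Hb. contradiction.
Qed.

Lemma alpha_props_false q : U q -> partial false psi q <> 0 ->
  partial false (alpha false true) q = partial true (alpha false false) q /\
  (forall i j, g i j q = / 2 * (alpha false i q * partial j psi q + alpha false j q * partial i psi q)) /\
  alpha false false q * partial true psi q - alpha false true q * partial false psi q <> 0.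
Proof.
  intros Uq Hb.
  assert (Hd := det_ne q Uq). unfold mdet in Hd. rewrite (Hsym true false q Uq) in Hd.
  assert (Hn := num_zero q Uq (HN q Uq)).
  assert (Hg11 : g true true q = (2 * g false true q * partial false psi q * partial true psi q
     - g false false q * partial true psi q * partial true psi q) / (partial false psi q * partial false psi q)).
  { apply (Rmult_eq_reg_r (partial false psi q * partial false psi q)).
    2: apply Rmult_integral_contrapositive_currified; auto.
    field_simplify; [lra|auto]. }
  set (k := g false false q * partial true psi q - g false true q * partial false psi q).
  assert (Hk : k <> 0).
  { intro Z. apply Hd. rewrite Hg11.
    replace (g false true q) with (g false false q * partial true psi q / partial false psi q).
    field; auto. apply (Rmult_eq_reg_r (partial false psi q)); auto. field_simplify; [|auto].
    unfold k in Z. lra. }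
  assert (Hg01 : g false true q = (g false false q * partial true psi q - k) / partial false psi q).
  { unfold k. field; auto. }
  clearbody k.
  assert (side : forall P : R, P = - (k * k) -> P <> 0).
  { intros P E Z. apply Hk. rewrite E in Z. assert (KK : k * k = 0) by lra.
    destruct (Rmult_integral _ _ KK); auto. }
  split; [|split].
  - dcompA (alpha false true). dcompA (alpha false false).
    rewrite !(HG q Uq). unfold HGfun, christoffel, ginv, sum2, mdet; cbn [Bool.eqb negb].
    symnorm q Uq. rewrite Hg11. rewrite Hg01. field. split; [auto|]. apply side; ring.
  - intros i j. unfold alpha. destruct i, j; cbn [Bool.eqb negb]; symnorm q Uq;
    try rewrite Hg11; rewrite ?Hg01; field; auto.
  - unfold alpha; cbn [Bool.eqb negb]. symnorm q Uq. rewrite Hg01.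
    replace (g false false q / partial false psi q * partial true psi q -
      (2 * ((g false false q * partial true psi q - k) / partial false psi q) * partial false psi q -
      g false false q * partial true psi q) / (partial false psi q * partial false psi q) * partial false psi q)
      with (2 * k / partial false psi q) by (field; auto).
    intro Z. apply Hk. apply (Rmult_eq_reg_r (2 / partial false psi q)).
    rewrite Rmult_0_l. rewrite <- Z. field. auto.
    intro Z'. apply Rmult_integral in Z'. destruct Z' as [Z'|Z']. lra. apply Rinv_neq_0_compat in Hb. contradiction.
Qed.

End Closed.

End Main.

Lemma RS_sub (U W : pt -> Prop) f : (forall q, W q -> U q) -> RS U f -> RS W f.
Proof.
  intros S. induction 1.
  - apply RS_base. apply (smooth_sub U); auto.
  - apply RS_const.
  - apply RS_plus; auto.
  - apply RS_mult; auto.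
  - apply RS_inv; auto.
  - apply RS_ext with h; auto.
Qed.

Lemma open_nz (U : pt -> Prop) (f : pt -> R) : open U -> (forall q, U q -> continuous f q) ->
  open (fun q => U q /\ f q <> 0).
Proof.
  intros HU Cf q [Uq Hq].
  destruct (open_box U q HU Uq) as [r1 [Hr1 B1]].
  assert (He : 0 < Rabs (f q)) by (apply Rabs_pos_lt; auto).
  destruct (loc_box _ _ (proj1 (filterlim_locally f (f q)) (Cf q Uq) (mkposreal _ He))) as [d [Hd Bd]].
  apply (box_loc q (Rmin r1 d)). apply Rmin_glb_lt; auto.
  intros z [z1 z2]. assert (m1 := Rmin_l r1 d). assert (m2 := Rmin_r r1 d). split.
  - apply B1. split; lra.
  - assert (Hz : Rabs (f z - f q) < Rabs (f q)). { apply (Bd z). split; lra. }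
    intro Z. rewrite Z in Hz. replace (0 - f q) with (- f q) in Hz by ring. rewrite Rabs_Ropp in Hz. lra.
Qed.

Section Final.
Variable U : pt -> Prop.
Variable g : metric.
Variable psi : pt -> R.
Hypothesis HU : open U.
Hypothesis Hgs : forall i j, smooth_on U (g i j).
Hypothesis Hsym : forall i j p, U p -> g i j p = g j i p.
Hypothesis Hdet : forall p, U p -> mdet g p < 0.
Hypothesis Hpsi : smooth_on U psi.

Lemma alpha_smooth c i : smooth_on (fun q => U q /\ partial c psi q <> 0) (alpha g psi c i).
Proof.
  set (W := fun q => U q /\ partial c psi q <> 0).
  assert (HW : open W).
  { apply open_nz; auto. intros q Uq. apply (smooth_cont U); auto. apply smooth_partial; auto. }
  assert (SW : forall q, W q -> U q) by (intros q [H _]; auto).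
  apply (RS_smooth W HW).
  assert (Hg : forall a b, RS W (g a b)) by (intros; apply RS_base; apply (smooth_sub U); auto).
  assert (Hp : forall a, RS W (partial a psi)) by (intros; apply RS_base; apply (smooth_sub U); auto; apply smooth_partial; auto).
  destruct c, i; unfold alpha; cbn [Bool.eqb negb];
  rs_struct ltac:(first [apply Hg | apply Hp]); intros q [Uq Hq]; auto;
  apply Rmult_integral_contrapositive_currified; auto.
Qed.

End Final.

Theorem lemma1 (U : pt -> Prop) (g : metric) (psi : pt -> R) :
  open U ->
  is_lorentzian_metric U g ->
  smooth_on U psi ->
  dpsi_nonvanishing U psi ->
  dpsi_conformal_killing U g psi ->
  dpsi_null U g psi ->
  flat_on U g /\
  (forall p, U p ->
     exists (V : pt -> Prop) (u v : pt -> R),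
       open V /\ V p /\ (forall q, V q -> U q) /\
       coord_system V u v /\
       metric_is_du_dv V g u v /\
       (forall q, V q -> psi q = v q)).
Proof.
  intros HU [Hgs [Hsym Hdet]] Hpsi Hnv [lam Hlam] Hnull.
  assert (HN : forall q, U q -> Nfun g psi q = 0) by exact Hnull.
  assert (HG : forall q, U q -> forall i j, partial i (partial j psi) q = HGfun g psi i j q).
  { intros q Uq i j.
    assert (L0 : lam q = 0) by (apply (lam_zero U g psi HU Hgs Hsym Hdet Hpsi q (lam q) Uq (Hlam q Uq) HN (Hnv q Uq))).
    apply (hess_gamma U g psi HU Hgs Hsym Hdet Hpsi q i j Uq).
    intros; rewrite <- L0; apply Hlam; auto. }
  split.
  { intros p Up. apply (flat_pt U g psi HU Hgs Hsym Hdet Hpsi p HG Up (Hnv p Up)). }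
  intros p Up. destruct (Hnv p Up) as [c Hc].
  set (Wc := fun q => U q /\ partial c psi q <> 0).
  assert (HW : open Wc).
  { apply open_nz; auto. intros q Uq. apply (smooth_cont U); auto. apply smooth_partial; auto. }
  assert (SW : forall q, Wc q -> U q) by (intros q [H _]; auto).
  assert (Props : forall q, Wc q ->
     partial true (alpha g psi c false) q = partial false (alpha g psi c true) q /\
     (forall i j, g i j q = / 2 * (alpha g psi c i q * partial j psi q + alpha g psi c j q * partial i psi q)) /\
     alpha g psi c false q * partial true psi q - alpha g psi c true q * partial false psi q <> 0).
  { intros q [Uq Hq]. destruct c.
    - destruct (alpha_props_true U g psi HU Hgs Hsym Hdet Hpsi HN HG q Uq Hq) as [A1 [A2 A3]]; auto.
    - destruct (alpha_props_false U g psi HU Hgs Hsym Hdet Hpsi HN HG q Uq Hq) as [A1 [A2 A3]]; auto. }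
  destruct (coords_exist Wc (alpha g psi c false) (alpha g psi c true) psi p HW) as [W [u [HWo [Wp [WS [Su [Pu Inj]]]]]]].
  - split; auto.
  - apply alpha_smooth; auto.
  - apply alpha_smooth; auto.
  - apply (smooth_sub U); auto.
  - intros q Wq. apply (Props q Wq).
  - apply (Props p). split; auto.
  - exists W, u, psi. split; auto. split; auto. split. { intros q Wq; apply SW, WS; auto. }
    split; [|split; [|auto]].
    + split; [auto|split; [apply (smooth_sub U); auto; intros; apply SW, WS; auto|split]].
      * intros q q' Wq Wq' E1 E2. apply Inj; auto.
      * intros q Wq. destruct (Pu q Wq) as [E0 E1]. rewrite E0, E1. apply (Props q (WS q Wq)).
    + intros q Wq i j. destruct (Pu q Wq) as [E0 E1].
      rewrite (proj1 (proj2 (Props q (WS q Wq))) i j).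
      destruct i, j; rewrite ?E0, ?E1; reflexivity.
Qed.
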